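(* Let $q=p^n$ with $p$ prime and $n\in\mathbb{Z}^+$, let $\chi$ be a generator of the cyclic group $\widehat{\mathbb{F}_q^{\times}}$ of multiplicative characters of $\mathbb{F}_q$, let $k$ be a positive integer with $k\mid q-1$, and let $m=(q-1)/k$. Define the $m\times m$ matrices $$A_q(k)=\left[G_q(\chi^{ki+kj})\right]_{0\le i,j\le m-1},\qquad B_q(k)=\left[G_q(\chi^{ki+kj})^{-1}\right]_{0\le i,j\le m-1}.$$ Then: (i) $\det A_q(k)\in\mathbb{Z}$ and $\det B_q(k)\in\mathbb{Q}$, and both determinants are independent of the choice of the generator $\chi$. (ii) $\det A_q(k)\equiv (-1)^{\frac{m^2-m+2}{2}}\pmod p$.
   Context: For any multiplicative character $\psi$ of $\mathbb{F}_q$ we set $\psi(0)=0$ (in particular the trivial character $\varepsilon$ satisfies $\varepsilon(0)=0$). Let $\zeta_p=e^{2\pi i/p}$ and $\mathrm{Tr}=\mathrm{Tr}_{\mathbb{F}_q/\mathbb{F}_p}$, $\mathrm{Tr}(x)=\sum_{j=0}^{n-1}x^{p^j}$. The Gauss sum is $G_q(\psi)=\sum_{x\in\mathbb{F}_q}\psi(x)\zeta_p^{\mathrm{Tr}(x)}$. Powers $\chi^r$ are taken for arbitrary integers $r$ in the group of characters. *)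

(* Defs.v *)
From HB Require Import structures.
From mathcomp Require Import all_boot all_order all_algebra all_field.
Set Implicit Arguments.
Unset Strict Implicit.
Unset Printing Implicit Defensive.
Import Order.TTheory GRing.Theory Num.Theory.
Local Open Scope ring_scope.

Section Gauss.
Variable F : finFieldType.

Definition is_mchar (psi : F -> algC) : Prop :=
  [/\ psi 0 = 0, psi 1 = 1 & forall x y, psi (x * y) = psi x * psi y].

Definition mchar_pow (chi : F -> algC) (r : int) : F -> algC :=
  fun x => if x == 0 then 0 else (chi x) ^ r.

Definition mchar_generator (chi : F -> algC) : Prop :=
  is_mchar chi /\
  forall psi, is_mchar psi -> exists r : int, forall x, psi x = mchar_pow chi r x.

(* zeta_p = e^{2 pi i / p}: p.-root (-1) is e^{i pi / p} (minimal argument) *)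
Definition zeta (p : nat) : algC := (p.-root (-1)) ^+ 2.

Definition trace (p n : nat) (x : F) : F := \sum_(j < n) x ^+ (p ^ j).

Definition fp_rep (p : nat) (y : F) : nat :=
  if [pick k : 'I_p | (k%:R : F) == y] is Some k then val k else 0%N.

Definition addchar (p n : nat) (x : F) : algC := zeta p ^+ fp_rep p (trace p n x).

Definition gauss (p n : nat) (psi : F -> algC) : algC :=
  \sum_(x : F) psi x * addchar p n x.

Definition Amat (p n : nat) (chi : F -> algC) (k : nat) :
  'M[algC]_((p ^ n).-1 %/ k) :=
  \matrix_(i, j) gauss p n (mchar_pow chi ((k * i + k * j)%N)%:Z).

Definition Bmat (p n : nat) (chi : F -> algC) (k : nat) :
  'M[algC]_((p ^ n).-1 %/ k) :=
  \matrix_(i, j) (gauss p n (mchar_pow chi ((k * i + k * j)%N)%:Z))^-1.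

End Gauss.

(* Main.v *)
Require Import Defs.
From HB Require Import structures.
From mathcomp Require Import all_boot all_order all_algebra all_field.
From mathcomp Require Import all_fingroup all_solvable integral_char zify.
Set Implicit Arguments.
Unset Strict Implicit.
Unset Printing Implicit Defensive.
Import Order.TTheory GRing.Theory Num.Theory.
Local Open Scope ring_scope.

Section FF.
Variables (p n : nat) (F : finFieldType).
Hypotheses (pr_p : prime p) (n_gt0 : (0 < n)%N) (cardF : #|F| = (p ^ n)%N).

Lemma charF : p \in [pchar F].
Proof. exact: (card_finPcharP cardF pr_p). Qed.

Lemma q_gt1 : (1 < p ^ n)%N.
Proof. by rewrite -cardF finNzRing_gt1. Qed.

Lemma qE : (p ^ n)%N = ((p ^ n).-1).+1.
Proof. by rewrite prednK // ltnW // q_gt1. Qed.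

Lemma fermatF (x : F) : x != 0 -> x ^+ (p ^ n).-1 = 1.
Proof.
move=> x0; have := expf_card x; rewrite cardF qE exprSr.
by move/(canRL (mulfK x0)); rewrite divff.
Qed.

Lemma expF_q (x : F) : x ^+ (p ^ n) = x.
Proof. by rewrite -cardF expf_card. Qed.

Lemma natF_frob (c j : nat) : (c%:R : F) ^+ (p ^ j) = c%:R.
Proof.
elim: j => [|j IH]; first by rewrite expr1.
by rewrite expnSr exprM IH -(pFrobenius_autE charF) pFrobenius_aut_nat.
Qed.

Lemma trace_natM (c : nat) (x : F) : trace p n (c%:R * x) = c%:R * trace p n x.
Proof.
rewrite /trace mulr_sumr; apply: eq_bigr => j _.
by rewrite exprMn natF_frob.
Qed.

Lemma trace_frob (x : F) : trace p n x ^+ p = trace p n x.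
Proof.
rewrite -(pFrobenius_autE charF) /trace rmorph_sum /=.
have xq := expF_q x.
move: xq; rewrite -(prednK n_gt0); set n' := n.-1 => xq.
rewrite [LHS]big_ord_recr [RHS]big_ord_recl /= expn0 expr1 addrC; congr (_ + _).
  by rewrite pFrobenius_autE -exprM -expnSr.
apply: eq_bigr => j _; rewrite pFrobenius_autE -exprM -expnSr //.
Qed.

Lemma natF_inj (i j : nat) : (i < p)%N -> (j < p)%N -> (i%:R : F) = j%:R -> i = j.
Proof.
wlog le_ij : i j / (i <= j)%N => [H|] ip jp eij.
  by case/orP: (leq_total i j) => h; [apply: H | symmetry; apply: H].
apply/eqP; rewrite eqn_leq le_ij /=.
have : (p %| j - i)%N by rewrite (dvdn_pcharf charF) natrB // eij subrr.
have [/eqP|lt0] := posnP (j - i)%N; first by rewrite subn_eq0.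
move/(dvdn_leq lt0); rewrite leqNgt => /negP; case.
by apply: leq_ltn_trans (leq_subr _ _) jp.
Qed.

Lemma primeF_elem (y : F) : y ^+ p = y -> exists2 j, (j < p)%N & (j%:R : F) = y.
Proof.
move=> yp.
have [/existsP[j /eqP Hj]|none] := boolP [exists j : 'I_p, (j%:R : F) == y].
  by exists j.
exfalso.
pose P : {poly F} := 'X^p - 'X.
have p1 := prime_gt1 pr_p.
have sP : size P = p.+1.
  by rewrite /P size_addl ?size_polyXn // size_opp size_polyX ltnS.
have P0 : P != 0 by rewrite -size_poly_eq0 sP.
pose rs := y :: [seq (j%:R : F) | j <- iota 0 p].
have := max_poly_roots P0 (rs := rs).
rewrite /= size_map size_iota sP ltnn.
have rootP z : z ^+ p = z -> root P z.
  by move=> zp; rewrite /root /P !hornerE zp subrr.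
have -> : root P y by exact: rootP.
have -> : all (root P) [seq (j%:R : F) | j <- iota 0 p].
  apply/allP => z /mapP[j _ ->]; apply: rootP.
  by rewrite -(pFrobenius_autE charF) pFrobenius_aut_nat.
have -> : y \notin [seq (j%:R : F) | j <- iota 0 p].
  apply/mapP => -[j]; rewrite mem_iota add0n => /andP[_ jp] yj.
  by move/existsP: none; apply; exists (Ordinal jp); rewrite yj.
rewrite map_inj_in_uniq ?iota_uniq //; first by move=> /(_ isT isT).
move=> i j; rewrite !mem_iota !add0n => /andP[_ ip] /andP[_ jp].
exact: natF_inj.
Qed.

Lemma trace_prime (x : F) : exists2 j, (j < p)%N & (j%:R : F) = trace p n x.
Proof. exact/primeF_elem/trace_frob. Qed.

Lemma fp_rep_nat (j : nat) : (j < p)%N -> fp_rep p (j%:R : F) = j.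
Proof.
move=> jp; rewrite /fp_rep; case: pickP => [k /eqP Hk|none].
  by apply: natF_inj => //; rewrite ltn_ord.
by have := none (Ordinal jp); rewrite eqxx.
Qed.

Lemma fp_rep_trace_mul (c : nat) (x : F) :
  fp_rep p (trace p n (c%:R * x)) = ((c * fp_rep p (trace p n x)) %% p)%N.
Proof.
have [j jp Hj] := trace_prime x.
rewrite trace_natM -Hj fp_rep_nat // -natrM -(GRing.natr_mod_pchar charF) fp_rep_nat //.
by rewrite ltn_mod prime_gt0.
Qed.

Lemma F_prim_root : exists g : F, (p ^ n).-1.-primitive_root g.
Proof.
pose rs := enum (predC1 (0 : F)).
have : has (p ^ n).-1.-primitive_root rs.
  apply: has_prim_root.
  - by move: q_gt1; case: (p ^ n)%N => [|[]].
  - apply/allP => x; rewrite mem_enum /= => x0.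
    by rewrite unity_rootE fermatF.
  - exact: enum_uniq.
  - by rewrite -cardE cardC1 cardF.
by case/hasP => g _ Hg; exists g.
Qed.

End FF.

Lemma zeta_prim p : prime p -> p.-primitive_root (zeta p).
Proof.
move=> pr_p; have p0 := prime_gt0 pr_p; have p1 := prime_gt1 pr_p.
pose r : algC := p.-root (-1).
have zE : zeta p = r ^+ 2 by [].
have rp : r ^+ p = -1 by rewrite /r rootCK.
have zp : zeta p ^+ p = 1 by rewrite zE -exprM mulnC exprM rp sqrrN expr1n.
have z1 : zeta p != 1.
  rewrite zE; apply/eqP => /eqP; rewrite -subr_eq0 subr_sqr_1 mulf_eq0 !subr_eq0.
  case/orP=> [/eqP r1|].
    move: rp; rewrite r1 expr1n => /eqP; rewrite -subr_eq0 opprK.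
    by rewrite -mulr2n pnatr_eq0.
  rewrite addr_eq0 => /eqP r1.
  have : r < 0 by rewrite r1 ltrN10.
  by rewrite /r rootC_lt0.
have [d pd dp] := prim_order_exists p0 zp.
case/primeP: pr_p => _ /(_ d dp) /orP[]/eqP dE; last by move: pd; rewrite dE.
have := prim_expr_order pd; rewrite dE expr1 => z1'.
by rewrite z1' eqxx in z1.
Qed.

Lemma zeta_p p : prime p -> zeta p ^+ p = 1.
Proof. by move/zeta_prim/prim_expr_order. Qed.

Lemma prod_one_sub_root (p : nat) (z : algC) : p.-primitive_root z ->
  \prod_(1 <= i < p) (1 - z ^+ i) = p%:R.
Proof.
move=> pz; have p0 := prim_order_gt0 pz.
have H := factor_Xn_sub_1 pz.
rewrite subrX1 big_ltn // expr0 in H.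
have X1 : ('X - 1 : {poly algC}) != 0 by rewrite polyXsubC_eq0.
have := mulfI X1 H; move/(congr1 (fun P => P.[1])).
rewrite horner_prod horner_sum.
under eq_bigr do rewrite hornerXsubC.
under [X in _ = X -> _]eq_bigr do rewrite hornerXn expr1n.
by rewrite sumr_const card_ord => ->.
Qed.


Section Chars.
Variables (p n : nat) (F : finFieldType).
Hypotheses (pr_p : prime p) (n_gt0 : (0 < n)%N) (cardF : #|F| = (p ^ n)%N).
Local Notation Q1 := (p ^ n).-1.

Lemma Q1_gt0 : (0 < Q1)%N.
Proof. by move: (q_gt1 cardF); case: (p ^ n)%N => [|[]]. Qed.

Section OneChar.
Variable chi : F -> algC.
Hypothesis mc : is_mchar chi.

Lemma chi0 : chi 0 = 0. Proof. by case: mc. Qed.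
Lemma chi1 : chi 1 = 1. Proof. by case: mc. Qed.
Lemma chiM x y : chi (x * y) = chi x * chi y. Proof. by case: mc. Qed.

Lemma chiX x i : chi (x ^+ i) = chi x ^+ i.
Proof. by elim: i => [|i IH]; rewrite ?expr0 ?chi1 // !exprS chiM IH. Qed.

Lemma chi_root x : x != 0 -> chi x ^+ Q1 = 1.
Proof. by move=> x0; rewrite -chiX (fermatF cardF x0) chi1. Qed.

Lemma chi_neq0 x : x != 0 -> chi x != 0.
Proof.
move=> x0; apply/eqP => c0; have := chi_root x0.
by rewrite c0 expr0n gtn_eqF ?Q1_gt0 //= => /eqP; rewrite eq_sym oner_eq0.
Qed.

Lemma mchar_pow_nat (a : nat) x :
  mchar_pow chi a%:Z x = if x == 0 then 0 else chi x ^+ a.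
Proof. by []. Qed.

Lemma mchar_pow_mod (a : nat) x :
  mchar_pow chi (a %% Q1)%N%:Z x = mchar_pow chi a%:Z x.
Proof.
rewrite !mchar_pow_nat; case: eqP => // /eqP x0.
by rewrite expr_mod // chi_root.
Qed.

End OneChar.

Lemma gen_prim (chi : F -> algC) (g : F) :
  mchar_generator chi -> Q1.-primitive_root g -> Q1.-primitive_root (chi g).
Proof.
move=> [mc gen] pg.
have [w pw] := C_prim_root_exists Q1_gt0.
have g0 : g != 0.
  apply/eqP => g0; move: (prim_expr_order pg); rewrite g0 expr0n gtn_eqF ?Q1_gt0 //.
  by move/eqP; rewrite eq_sym oner_eq0.
have xg x : x != 0 -> {i : 'I_Q1 | x = g ^+ i}.
  by move=> x0; apply: (prim_rootP pg); rewrite fermatF.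
pose dlog x := if [pick i : 'I_Q1 | g ^+ i == x] is Some i then val i else 0%N.
have dlogP x : x != 0 -> g ^+ dlog x = x.
  move=> x0; rewrite /dlog; case: pickP => [i /eqP //|none].
  by have [i Hi] := xg x x0; have := none i; rewrite -Hi eqxx.
pose psi x : algC := if x == 0 then 0 else w ^+ dlog x.
have psiE x : x != 0 -> psi x = w ^+ dlog x by rewrite /psi => /negPf ->.
have mpsi : is_mchar psi.
  split; first by rewrite /psi eqxx.
    rewrite psiE ?oner_eq0 //; apply/eqP; rewrite -(expr0 w) (eq_prim_root_expr pw).
    by rewrite -(eq_prim_root_expr pg) dlogP ?oner_eq0 ?expr0.
  move=> x y; have [->|x0] := eqVneq x 0; first by rewrite mul0r /psi eqxx mul0r.
  have [->|y0] := eqVneq y 0; first by rewrite mulr0 /psi eqxx mulr0.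
  have xy0 : x * y != 0 by rewrite mulf_neq0.
  rewrite !psiE // -exprD; apply/eqP; rewrite (eq_prim_root_expr pw).
  by rewrite -(eq_prim_root_expr pg) exprD !dlogP.
have [r Hr] := gen psi mpsi.
have wE : w = chi g ^ r.
  have := Hr g; rewrite psiE // /mchar_pow (negPf g0) => <-.
  apply/eqP; rewrite -{1}(expr1 w) eq_sym (eq_prim_root_expr pw).
  by rewrite -(eq_prim_root_expr pg) expr1 dlogP.
have [d pd dQ] := prim_order_exists Q1_gt0 (chi_root mc g0).
suff dE : d = Q1 by rewrite -dE.
apply/eqP; rewrite eqn_dvd dQ /= (prim_order_dvd pw) wE.
have -> : (chi g ^ r) ^+ d = (chi g ^+ d) ^ r.
  by have := exprzAC (chi g) r d%:Z.
by rewrite (prim_expr_order pd) exp1rz.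
Qed.

Definition tn (r : int) : nat :=
  match r with Posz a => a | Negz a => (Q1.-1 * a.+1)%N end.

Lemma intexp_nat (u : algC) (r : int) : u ^+ Q1 = 1 -> u ^ r = u ^+ tn r.
Proof.
move=> uQ; case: r => a //=.
have u0 : u ^+ a.+1 != 0.
  apply/eqP => /eqP; rewrite expf_eq0 /= => /eqP u0.
  by move: uQ; rewrite u0 expr0n gtn_eqF ?Q1_gt0 // => /eqP; rewrite eq_sym oner_eq0.
apply: (mulIf u0); rewrite mulVf // -exprD -{2}(mul1n a.+1) -mulnDl addn1.
by rewrite (prednK Q1_gt0) exprM uQ expr1n.
Qed.

Lemma gen_change (chi chi' : F -> algC) :
  mchar_generator chi -> mchar_generator chi' ->
  exists2 t, coprime t Q1 & forall x, x != 0 -> chi' x = chi x ^+ t.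
Proof.
move=> gc gc'; have [g pg] := F_prim_root cardF.
have [r Hr] := gc.2 chi' gc'.1.
have E x : x != 0 -> chi' x = chi x ^+ tn r.
  move=> x0; rewrite Hr /mchar_pow (negPf x0) intexp_nat //.
  exact: (chi_root gc.1 x0).
exists (tn r) => //.
have g0 : g != 0.
  apply/eqP => g0; move: (prim_expr_order pg); rewrite g0 expr0n gtn_eqF ?Q1_gt0 //.
  by move/eqP; rewrite eq_sym oner_eq0.
rewrite -(prim_root_exp_coprime _ (gen_prim gc pg)) -E //.
exact: gen_prim gc' pg.
Qed.

Lemma aut_chi (chi : F -> algC) (nu : {rmorphism algC -> algC}) :
  mchar_generator chi ->
  exists2 t, coprime t Q1 & forall x, x != 0 -> nu (chi x) = chi x ^+ t.
Proof.
move=> gc; have [g pg] := F_prim_root cardF.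
have pcg := gen_prim gc pg.
have [t Ht] : exists t, nu (chi g) = chi g ^+ t.
  have := @prim_rootP _ _ _ pcg (nu (chi g)).
  rewrite -rmorphXn (prim_expr_order pcg) rmorph1 => /(_ erefl) [i ->].
  by exists i.
exists t.
  by rewrite -(prim_root_exp_coprime _ pcg) -Ht fmorph_primitive_root.
move=> x x0; have [i ->] := prim_rootP pg (fermatF cardF x0).
by rewrite (chiX gc.1) rmorphXn Ht -!exprM mulnC.
Qed.

End Chars.

Section Mx.
Variable R : comNzRingType.

Lemma det_perm_conj m (M : 'M[R]_m) (s : 'S_m) :
  \det (\matrix_(i, j) M (s i) (s j)) = \det M.
Proof.
have -> : \matrix_(i, j) M (s i) (s j) = row_perm s (col_perm s M).
  by apply/matrixP => i j; rewrite !mxE.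
rewrite row_permE col_permE !det_mulmx !det_perm odd_permV mulrCA mulrA.
by rewrite -mulrA -expr2 sqrr_sign mulr1.
Qed.

Lemma det_diag_conj m (M : 'M[R]_m) (d : 'I_m -> R) :
  \det (\matrix_(i, j) (d i * d j * M i j)) = (\prod_i d i) ^+ 2 * \det M.
Proof.
pose D : 'rV_m := \row_i d i.
have -> : \matrix_(i, j) (d i * d j * M i j) = diag_mx D *m M *m diag_mx D.
  apply/matrixP => i j; rewrite mul_mx_diag mul_diag_mx !mxE.
  by rewrite mulrAC.
rewrite !det_mulmx det_diag expr2.
rewrite (eq_bigr d) => [|i _]; last by rewrite mxE.
by rewrite mulrAC.
Qed.

Definition Jmx n : 'M[R]_n := \matrix_(i, j) ((i + j == n.-1)%N%:R).

Lemma det_Jmx n : \det (Jmx n) = (-1) ^+ 'C(n, 2).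
Proof.
elim: n => [|n IH]; first by rewrite det_mx00.
rewrite (expand_det_row _ ord0) (bigD1 ord_max) //= big1 => [|j jn]; last first.
  rewrite !mxE /= add0n.
  by rewrite (_ : (j == n :> nat) = false) ?mul0r //; apply/negbTE.
rewrite addr0 !mxE add0n eqxx mul1r /cofactor /= add0n.
have -> : row' ord0 (col' ord_max (Jmx n.+1)) = Jmx n.
  apply/matrixP => i j; rewrite !mxE lift0 lift_max /=.
  case: n {IH} i j => [|n] i j; first by case: i.
  by rewrite addSn eqSS.
by rewrite IH binS bin1 -exprD addnC.
Qed.

Definition Amod m : 'M[R]_m := \matrix_(i, j) (if ((i + j) %% m == 0)%N then -1 else 0).

Lemma det_Amod m : (0 < m)%N -> \det (Amod m) = (-1) ^+ ('C(m, 2) + 1).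
Proof.
case: m => // m _.
rewrite (expand_det_row _ ord0) (bigD1 ord0) //= big1 => [|j j0]; last first.
  rewrite !mxE /= add0n modn_small ?ltn_ord //.
  by rewrite (_ : (j == 0 :> nat) = false) ?mul0r //; apply/negbTE.
rewrite addr0 !mxE add0n mod0n eqxx /cofactor /= add0n expr0 mul1r.
have -> : row' ord0 (col' ord0 (Amod m.+1)) = - Jmx m.
  apply/matrixP => i j; rewrite !mxE !lift0.
  have Hij : (((i.+1 + j.+1) %% m.+1 == 0) = (i + j == m.-1))%N.
    have ilt := ltn_ord i; have jlt := ltn_ord j.
    apply/idP/idP => [/dvdnP[k Hk]|/eqP Hm].
      case: k Hk => [|[|k]] Hk; [lia | apply/eqP; lia | nia].
    by apply/dvdnP; exists 1%N; lia.
  by rewrite Hij; case: (_ == _) => /=; rewrite ?oppr0.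
rewrite -scaleN1r detZ det_Jmx -!exprD mulN1r binS bin1 addn1 exprS mulN1r.
by rewrite addnC.
Qed.

End Mx.

Definition cyc (N : nat) (x : algC) : Prop :=
  forall P : algC -> Prop,
    (forall a b, P a -> P b -> P (a + b)) ->
    (forall a b, P a -> P b -> P (a * b)) ->
    (forall a, P a -> P (- a)) ->
    (forall a, P a -> P a^-1) ->
    (forall z, z ^+ N = 1 -> P z) -> P x.

Section Cyc.
Variable N : nat.

Lemma cycD a b : cyc N a -> cyc N b -> cyc N (a + b).
Proof. by move=> ha hb; rewrite /cyc => P hD hM hN hV hz; apply: (hD); [exact: (ha P hD hM hN hV hz) | exact: (hb P hD hM hN hV hz)]. Qed.
Lemma cycM a b : cyc N a -> cyc N b -> cyc N (a * b).
Proof. by move=> ha hb; rewrite /cyc => P hD hM hN hV hz; apply: (hM); [exact: (ha P hD hM hN hV hz) | exact: (hb P hD hM hN hV hz)]. Qed.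
Lemma cycN a : cyc N a -> cyc N (- a).
Proof. by move=> ha; rewrite /cyc => P hD hM hN hV hz; apply: (hN); exact: (ha P hD hM hN hV hz). Qed.
Lemma cycV a : cyc N a -> cyc N a^-1.
Proof. by move=> ha; rewrite /cyc => P hD hM hN hV hz; apply: (hV); exact: (ha P hD hM hN hV hz). Qed.
Lemma cyc_root z : z ^+ N = 1 -> cyc N z.
Proof. by move=> hz0; rewrite /cyc => P hD hM hN hV hz; exact: hz. Qed.
Lemma cyc1 : cyc N 1.
Proof. by apply: cyc_root; rewrite expr1n. Qed.
Lemma cyc0 : cyc N 0.
Proof. rewrite -(subrr 1); apply: cycD; first exact: cyc1. by apply: cycN; apply: cyc1. Qed.
Lemma cycX a i : cyc N a -> cyc N (a ^+ i).
Proof. by move=> ha; elim: i => [|i IH]; [apply: cyc1 | rewrite exprS; apply: cycM]. Qed.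
Lemma cyc_sum (I : Type) (r : seq I) (P : pred I) (f : I -> algC) :
  (forall i, P i -> cyc N (f i)) -> cyc N (\sum_(i <- r | P i) f i).
Proof. by move=> H; apply: big_ind => //; [apply: cyc0 | apply: cycD]. Qed.
Lemma cyc_prod (I : Type) (r : seq I) (P : pred I) (f : I -> algC) :
  (forall i, P i -> cyc N (f i)) -> cyc N (\prod_(i <- r | P i) f i).
Proof. by move=> H; apply: big_ind => //; [apply: cyc1 | apply: cycM]. Qed.
Lemma cyc_det m (M : 'M[algC]_m) : (forall i j, cyc N (M i j)) -> cyc N (\det M).
Proof.
move=> H; apply: cyc_sum => s _; apply: cycM.
  by apply: cycX; apply: cycN; apply: cyc1.
by apply: cyc_prod.
Qed.
End Cyc.

Lemma fixed_rat (N : nat) (x : algC) : (0 < N)%N -> cyc N x ->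
  (forall nu : {rmorphism algC -> algC}, nu x = x) -> x \in Crat.
Proof.
case: N => // N' _ cx fix_x.
pose G := [set: 'I_N'.+1]%G.
have [Qn galQn [QnC ext [w [pw genw] _]]] := group_num_field_exists G.
rewrite cardsT card_ord in pw.
pose P y := exists a, QnC a = y.
have [a Ha] : P x.
  apply: cx.
  - by move=> _ _ [a <-] [b <-]; exists (a + b); rewrite rmorphD.
  - by move=> _ _ [a <-] [b <-]; exists (a * b); rewrite rmorphM.
  - by move=> _ [a <-]; exists (- a); rewrite rmorphN.
  - by move=> _ [a <-]; exists (a^-1); rewrite fmorphV.
  - move=> z zN.
    have pz : N'.+1.-primitive_root (QnC w) by rewrite fmorph_primitive_root.
    have [i ->] := prim_rootP pz zN.
    by exists (w ^+ i); rewrite rmorphXn.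
have : a \in fixedField 'Gal({:Qn} / 1)%g.
  apply/fixedFieldP; first exact: memvf.
  move=> nuQn _; have [nu Dnu] := ext nuQn.
  by apply: (fmorph_inj QnC); rewrite Dnu Ha fix_x.
have /galois_fixedField fE := galQn; rewrite fE => /vlineP[r ar].
by rewrite -Ha ar rmorphZ_num rmorph1 mulr1 Crat_rat.
Qed.

Lemma Cint_Crat x : x \in Num.int -> x \in Crat.
Proof. by move=> Zx; rewrite -(floorK Zx) rpred_int. Qed.

Lemma det_cong m (M M' : 'M[algC]_m) (e : algC) :
  (forall i j, M i j \in Aint) -> (forall i j, M' i j \in Aint) ->
  (forall i j, (M i j == M' i j %[mod e])%A) -> (\det M == \det M' %[mod e])%A.
Proof.
move=> AM AM' cM.
pose K (a b : algC) := [/\ a \in Aint, b \in Aint & (a == b %[mod e])%A].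
suff : K (\det M) (\det M') by case.
apply: (big_ind2 K) => [|a1 a2 b1 b2 [h1 h2 h3] [h4 h5 h6]|s _].
- by split; rewrite ?rpred0.
- by split; rewrite ?rpredD //; apply: eqAmodD.
have Ks : K ((-1) ^+ s) ((-1) ^+ s) by split; rewrite ?rpredX ?rpredN ?rpred1.
have KP : K (\prod_i M i (s i)) (\prod_i M' i (s i)).
  apply: (big_ind2 K) => [|a1 a2 b1 b2 [h1 h2 h3] [h4 h5 h6]|i _].
  - by split; rewrite ?rpred1.
  - by split; rewrite ?rpredM //; apply: eqAmodM.
  by split.
case: Ks KP => [h1 h2 h3] [h4 h5 h6].
by split; rewrite ?rpredM //; apply: eqAmodM.
Qed.

Lemma root_cong (z : algC) (e : nat) : z \in Aint -> (z ^+ e == 1 %[mod 1 - z])%A.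
Proof.
move=> Az; rewrite /eqAmod unfold_in.
case: ifP => [/eqP z1|nz].
  have z1' : z = 1 by apply/eqP; rewrite -subr_eq0 -oppr_eq0 opprB z1.
  by rewrite z1' expr1n subrr.
rewrite subrX1 -opprB mulNr mulrC mulrN mulKf ?nz //.
by rewrite rpredN rpred_sum // => i _; rewrite rpredX.
Qed.

Section PiDiv.
Variable p : nat.
Hypothesis pr_p : prime p.
Local Notation z := (zeta p).

Lemma zeta_Aint : z \in Aint.
Proof. exact: Aint_prim_root (zeta_prim pr_p). Qed.

Lemma one_sub_zeta_neq0 : 1 - z != 0.
Proof.
rewrite subr_eq0 eq_sym; apply/eqP => z1.
have := prim_order_dvd (zeta_prim pr_p) 1; rewrite -z1 expr1 eqxx.
by rewrite dvdn1 => /eqP p1; move: (prime_gt1 pr_p); rewrite p1.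
Qed.

Lemma p_cong : (p%:R == 0 %[mod 1 - z])%A.
Proof.
rewrite /eqAmod unfold_in (negPf one_sub_zeta_neq0) subr0.
rewrite -(prod_one_sub_root (zeta_prim pr_p)) big_ltn ?prime_gt1 //.
rewrite expr1 mulrAC divff ?one_sub_zeta_neq0 // mul1r.
apply: rpred_prod => i _; by rewrite rpredB ?rpred1 // rpredX // zeta_Aint.
Qed.

Lemma int_div_pi (N : algC) : N \in Num.int -> (N == 0 %[mod 1 - z])%A ->
  exists2 c, c \in Num.int & N = p%:R * c.
Proof.
move=> ZN; rewrite /eqAmod unfold_in (negPf one_sub_zeta_neq0) subr0 => Aal.
have p1 := prime_gt1 pr_p.
have Hj j : (1 <= j < p)%N -> N / (1 - z ^+ j) \in Aint.
  case/andP => j1 jp.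
  have cop : coprime j p.
    by rewrite coprime_sym prime_coprime // gtnNdvd.
  have [nu Hnu] := Qn_aut_exists cop.
  rewrite -(Aint_aut nu) in Aal.
  by rewrite fmorph_div rmorphB rmorph1 (aut_Crat nu (Cint_Crat ZN)) (Hnu z) ?zeta_p in Aal.
have : \prod_(1 <= j < p) (N / (1 - z ^+ j)) \in Aint.
  by rewrite big_nat_cond; apply: rpred_prod => j /andP[hj _]; apply: Hj.
rewrite prodf_div prod_one_sub_root ?zeta_prim // prodr_const_nat.
move=> AN.
have QN : N ^+ (p - 1) / p%:R \in Crat.
  by rewrite rpred_div ?rpredX ?rpred_nat ?Cint_Crat.
have ZN' : N ^+ (p - 1) / p%:R \in Num.int by apply: Cint_rat_Aint.
have p0 : (p%:R : algC) != 0 by rewrite pnatr_eq0 -lt0n prime_gt0.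
have dv : (p %| N ^+ (p - 1))%C by rewrite unfold_in (negPf p0).
rewrite dvdC_int ?rpredX // floorX // abszX Euclid_dvdX // subn_gt0 p1 andbT in dv.
rewrite -dvdC_int // unfold_in (negPf p0) in dv.
by exists (N / p%:R) => //; rewrite mulrC divfK.
Qed.
End PiDiv.

Section Gauss.
Variables (p n : nat) (F : finFieldType) (chi : F -> algC).
Hypotheses (pr_p : prime p) (n_gt0 : (0 < n)%N) (cardF : #|F| = (p ^ n)%N).
Hypothesis gc : mchar_generator chi.
Local Notation Q1 := (p ^ n).-1.
Local Notation mc := gc.1.

Definition Gs (a : nat) : algC := gauss p n (mchar_pow chi a%:Z).

Lemma Gs_mod a : Gs (a %% Q1) = Gs a.
Proof. by apply: eq_bigr => x _; rewrite (mchar_pow_mod cardF mc). Qed.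

Lemma mpow_mul (u x : F) (a : nat) : u != 0 ->
  mchar_pow chi a%:Z (u * x) = chi u ^+ a * mchar_pow chi a%:Z x.
Proof.
move=> u0; rewrite !mchar_pow_nat; have [->|x0] := eqVneq x 0.
  by rewrite mulr0 eqxx mulr0.
by rewrite mulf_eq0 (negPf u0) (negPf x0) (chiM mc) exprMn.
Qed.

Lemma gauss_aut (nu : {rmorphism algC -> algC}) :
  exists t, exists2 beta, beta ^+ Q1 = 1 /\ coprime t Q1 &
    forall a, nu (Gs a) = beta ^+ (t * a) * Gs (t * a).
Proof.
have [t cop Ht] := aut_chi cardF nu gc.
have pz := zeta_prim pr_p.
have [c Hc] : exists c : 'I_p, nu (zeta p) = zeta p ^+ c.
  have h : nu (zeta p) ^+ p = 1 by rewrite -rmorphXn (zeta_p pr_p) rmorph1.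
  by have [c ->] := prim_rootP pz h; exists c.
have c0 : (c%:R : F) != 0.
  apply/eqP => c0.
  have : (p %| c)%N by rewrite (dvdn_pcharf (charF pr_p cardF)) c0.
  have [cz|cpos] := posnP c.
    move=> _; move: Hc; rewrite cz expr0 -(rmorph1 nu) => /fmorph_inj z1.
    by move: (prim_order_dvd pz 1); rewrite expr1 z1 eqxx dvdn1 => /eqP p1; move: (prime_gt1 pr_p); rewrite p1.
  by move/(dvdn_leq cpos); rewrite leqNgt ltn_ord.
pose u : F := (c%:R)^-1.
have u0 : u != 0 by rewrite invr_eq0.
exists t, (chi u); first by split => //; apply: (chi_root cardF mc).
move=> a.
have add_nu (x : F) : nu (addchar p n x) = addchar p n (c%:R * x).
  rewrite /addchar rmorphXn Hc -exprM (fp_rep_trace_mul pr_p n_gt0 cardF c x).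
  by rewrite (prim_expr_mod pz).
have mp_nu (x : F) : nu (mchar_pow chi a%:Z x) = mchar_pow chi (t * a)%N%:Z x.
  rewrite !mchar_pow_nat; case: eqP => [_|/eqP x0]; first by rewrite rmorph0.
  by rewrite rmorphXn Ht // -exprM.
rewrite /Gs /gauss rmorph_sum /=.
rewrite (reindex_inj (mulfI u0)) /= mulr_sumr; apply: eq_bigr => x _.
by rewrite rmorphM mp_nu add_nu mpow_mul // (mulrA (c%:R)) /u divff // mul1r mulrA.
Qed.

End Gauss.

Lemma perm_exists (m t : nat) : (0 < m)%N -> coprime t m ->
  {s : 'S_m | forall i, val (s i) = ((t * i) %% m)%N}.
Proof.
move=> m0 cop.
pose f (i : 'I_m) : 'I_m := Ordinal (ltn_pmod (t * i) m0).
have finj : injective f.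
  move=> i j /(congr1 val) /= /eqP Hij; apply/val_inj => /=.
  wlog le_ij : i j Hij / (i <= j)%N.
    move=> H; case/orP: (leq_total i j) => h; first exact: H.
    by symmetry; apply: H; rewrite // eq_sym.
  move: Hij; rewrite eq_sym eqn_mod_dvd ?leq_mul2l ?le_ij ?orbT // -mulnBr.
  rewrite Gauss_dvdr; last by rewrite coprime_sym.
  have hlt : (j - i < m)%N by apply: leq_ltn_trans (leq_subr _ _) (ltn_ord j).
  have [h0|pos] := posnP (j - i)%N.
    by move=> _; apply/eqP; rewrite eqn_leq le_ij /= -subn_eq0 h0.
  by move/(dvdn_leq pos); rewrite leqNgt hlt.
by exists (perm finj) => i; rewrite permE.
Qed.

Lemma sq_prod_one (beta : algC) (t k m : nat) : beta ^+ (k * m) = 1 ->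
  (\prod_(i < m) beta ^+ (t * (k * i))) ^+ 2 = 1.
Proof.
move=> bkm; rewrite expr2 {2}(reindex_inj rev_ord_inj) /= -big_split /=.
rewrite (eq_bigr (fun _ => beta ^+ (t * (k * m.-1)))) => [|i _].
  rewrite prodr_const card_ord -exprM.
  have -> : (t * (k * m.-1) * m = (k * m) * (t * m.-1))%N by nia.
  by rewrite exprM bkm expr1n.
rewrite -exprD -mulnDr -mulnDr; congr (_ ^+ (_ * (_ * _))).
have := ltn_ord i; rewrite /=; lia.
Qed.

Lemma mod_eq (Q k m t a b : nat) : Q = (k * m)%N ->
  ((t * (k * a + k * b)) %% Q = (k * ((t * a) %% m) + k * ((t * b) %% m)) %% Q)%N.
Proof.
move=> ->; rewrite !muln_modr modnDm; congr (_ %% _)%N; nia.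
Qed.

Section Main.
Variables (p n : nat) (F : finFieldType) (chi : F -> algC) (k : nat).
Hypotheses (pr_p : prime p) (n_gt0 : (0 < n)%N) (cardF : #|F| = (p ^ n)%N).
Hypothesis gc : mchar_generator chi.
Hypotheses (k_gt0 : (0 < k)%N) (kQ : (k %| (p ^ n).-1)%N).
Local Notation Q1 := (p ^ n).-1.
Local Notation m := ((p ^ n).-1 %/ k)%N.

Lemma QE : Q1 = (k * m)%N.
Proof. by rewrite mulnC divnK. Qed.

Lemma m_gt0 : (0 < m)%N.
Proof. by rewrite divn_gt0 // dvdn_leq // (Q1_gt0 cardF). Qed.

Lemma AmatE i j : Amat p n chi k i j = Gs p n chi (k * i + k * j).
Proof. by rewrite mxE. Qed.

Lemma BmatE i j : Bmat p n chi k i j = (Gs p n chi (k * i + k * j))^-1.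
Proof. by rewrite mxE. Qed.

Lemma Gs_perm (t : nat) (s : 'S_m) : (forall i, val (s i) = ((t * i) %% m)%N) ->
  forall i j : 'I_m, Gs p n chi (t * (k * i + k * j)) = Gs p n chi (k * s i + k * s j).
Proof.
move=> Hs i j; rewrite -(Gs_mod cardF gc) -[in RHS](Gs_mod cardF gc) !Hs.
by rewrite (mod_eq _ _ _ QE).
Qed.

Lemma det_aut (nu : {rmorphism algC -> algC}) :
  nu (\det (Amat p n chi k)) = \det (Amat p n chi k) /\
  nu (\det (Bmat p n chi k)) = \det (Bmat p n chi k).
Proof.
have [t0 [beta [bQ cop] Hnu]] := gauss_aut pr_p n_gt0 cardF gc nu.
have copm : coprime t0 m by apply: coprime_dvdr cop; apply/dvdnP; exists k; exact: QE.
have [s Hs] := perm_exists m_gt0 copm.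
pose d (i : 'I_m) := beta ^+ (t0 * (k * i)).
have bkm : beta ^+ (k * m) = 1 by rewrite -QE.
pose MA := \matrix_(i, j) Amat p n chi k (s i) (s j).
pose MB := \matrix_(i, j) Bmat p n chi k (s i) (s j).
split.
  rewrite -det_map_mx.
  have -> : map_mx nu (Amat p n chi k) = \matrix_(i, j) (d i * d j * MA i j).
    apply/matrixP => i j; rewrite !mxE -/(Gs _ _ _ _) Hnu.
    by rewrite (Gs_perm Hs) mulnDr exprD.
  by rewrite det_diag_conj det_perm_conj sq_prod_one // mul1r.
rewrite -det_map_mx.
have -> : map_mx nu (Bmat p n chi k) =
    \matrix_(i, j) ((d i)^-1 * (d j)^-1 * MB i j).
  apply/matrixP => i j; rewrite !mxE -/(Gs _ _ _ _) fmorphV Hnu.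
  by rewrite (Gs_perm Hs) mulnDr exprD !invfM.
rewrite det_diag_conj det_perm_conj prodfV exprVn sq_prod_one //.
by rewrite invr1 mul1r.
Qed.

Lemma det_indep (chi' : F -> algC) : mchar_generator chi' ->
  \det (Amat p n chi' k) = \det (Amat p n chi k) /\
  \det (Bmat p n chi' k) = \det (Bmat p n chi k).
Proof.
move=> gc'.
have [t cop Ht] := gen_change cardF gc gc'.
have copm : coprime t m by apply: coprime_dvdr cop; apply/dvdnP; exists k; exact: QE.
have [s Hs] := perm_exists m_gt0 copm.
have E a : gauss p n (mchar_pow chi' a%:Z) = Gs p n chi (t * a).
  apply: eq_bigr => x _; rewrite !mchar_pow_nat; case: eqP => // /eqP x0.
  by rewrite Ht // -exprM mulnC.
split.
  have -> : Amat p n chi' k = \matrix_(i, j) Amat p n chi k (s i) (s j).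
    by apply/matrixP => i j; rewrite !mxE E (Gs_perm Hs).
  by rewrite det_perm_conj.
have -> : Bmat p n chi' k = \matrix_(i, j) Bmat p n chi k (s i) (s j).
  by apply/matrixP => i j; rewrite !mxE E (Gs_perm Hs).
by rewrite det_perm_conj.
Qed.

End Main.

Lemma det_Aint m (M : 'M[algC]_m) : (forall i j, M i j \in Aint) -> \det M \in Aint.
Proof.
move=> H; apply: rpred_sum => s _; apply: rpredM.
  by rewrite rpredX ?rpredN ?rpred1.
by apply: rpred_prod => i _.
Qed.

Section Main2.
Variables (p n : nat) (F : finFieldType) (chi : F -> algC) (k : nat).
Hypotheses (pr_p : prime p) (n_gt0 : (0 < n)%N) (cardF : #|F| = (p ^ n)%N).
Hypothesis gc : mchar_generator chi.
Hypotheses (k_gt0 : (0 < k)%N) (kQ : (k %| (p ^ n).-1)%N).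
Local Notation Q1 := (p ^ n).-1.
Local Notation m := ((p ^ n).-1 %/ k)%N.
Local Notation mc := gc.1.

Lemma chi_Aint x : chi x \in Aint.
Proof.
have [->|x0] := eqVneq x 0; first by rewrite (chi0 mc) rpred0.
apply: (Aint_unity_root (Q1_gt0 cardF)).
by rewrite unity_rootE (chi_root cardF mc x0).
Qed.

Lemma mpow_Aint a x : mchar_pow chi a%:Z x \in Aint.
Proof. by rewrite mchar_pow_nat; case: eqP => _; rewrite ?rpred0 ?rpredX ?chi_Aint. Qed.

Lemma addchar_Aint (x : F) : addchar p n x \in Aint.
Proof. by rewrite rpredX // (zeta_Aint pr_p). Qed.

Lemma Gs_Aint a : Gs p n chi a \in Aint.
Proof. by apply: rpred_sum => x _; rewrite rpredM ?mpow_Aint ?addchar_Aint. Qed.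

Lemma Gs_cyc a : cyc (p * Q1) (Gs p n chi a).
Proof.
apply: cyc_sum => x _; apply: cycM.
  rewrite mchar_pow_nat; case: eqP => [_|/eqP x0]; first exact: cyc0.
  apply: cycX; apply: cyc_root.
  by rewrite mulnC exprM (chi_root cardF mc x0) expr1n.
apply: cycX; apply: cyc_root.
by rewrite exprM (zeta_p pr_p) expr1n.
Qed.

Lemma det_rat : \det (Amat p n chi k) \is a Num.int /\ \det (Bmat p n chi k) \in Crat.
Proof.
have N0 : (0 < p * Q1)%N by rewrite muln_gt0 prime_gt0 // (Q1_gt0 cardF).
split.
  apply: Cint_rat_Aint.
    apply: (fixed_rat N0).
      by apply: cyc_det => i j; rewrite mxE; apply: Gs_cyc.
    by move=> nu; case: (det_aut pr_p n_gt0 cardF gc k_gt0 kQ nu).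
  by apply: det_Aint => i j; rewrite mxE; apply: Gs_Aint.
apply: (fixed_rat N0).
  by apply: cyc_det => i j; rewrite mxE; apply: cycV; apply: Gs_cyc.
by move=> nu; case: (det_aut pr_p n_gt0 cardF gc k_gt0 kQ nu).
Qed.

End Main2.

Lemma dvd_eq (Q k m a b : nat) : (0 < k)%N -> Q = (k * m)%N ->
  (Q %| k * a + k * b)%N = ((a + b) %% m == 0)%N.
Proof. by move=> k0 ->; rewrite -mulnDr dvdn_pmul2l. Qed.

Section Main3.
Variables (p n : nat) (F : finFieldType) (chi : F -> algC) (k : nat).
Hypotheses (pr_p : prime p) (n_gt0 : (0 < n)%N) (cardF : #|F| = (p ^ n)%N).
Hypothesis gc : mchar_generator chi.
Hypotheses (k_gt0 : (0 < k)%N) (kQ : (k %| (p ^ n).-1)%N).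
Local Notation Q1 := (p ^ n).-1.
Local Notation m := ((p ^ n).-1 %/ k)%N.
Local Notation mc := gc.1.

Lemma sum_mpow a : \sum_x mchar_pow chi a%:Z x = if (Q1 %| a)%N then Q1%:R else 0.
Proof.
case: ifP => dv.
  rewrite (bigD1 0) //= mchar_pow_nat eqxx add0r.
  rewrite (eq_bigr (fun _ => 1)) => [|x x0]; last first.
    rewrite mchar_pow_nat (negPf x0); case/dvdnP: dv => c ->.
    by rewrite mulnC exprM (chi_root cardF mc x0) expr1n.
  by rewrite sumr_const cardC1 cardF.
have [g pg] := F_prim_root cardF.
have pcg := gen_prim cardF gc pg.
have g0 : g != 0.
  apply/eqP => g0; move: (prim_expr_order pg); rewrite g0 expr0n gtn_eqF ?(Q1_gt0 cardF) //.
  by move/eqP; rewrite eq_sym oner_eq0.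
set S := \sum_x _.
have : S = chi g ^+ a * S.
  rewrite {1}/S (reindex_inj (mulfI g0)) /= mulr_sumr; apply: eq_bigr => x _.
  by rewrite (mpow_mul gc).
move/eqP; rewrite -subr_eq0 -{1}(mul1r S) -mulrBl mulf_eq0 subr_eq0 eq_sym.
by rewrite -(prim_order_dvd pcg) dv /= => /eqP.
Qed.

Lemma Gs_cong a :
  (Gs p n chi a == (if (Q1 %| a)%N then -1 else 0) %[mod 1 - zeta p])%A.
Proof.
set e := 1 - zeta p.
have H1 : (Gs p n chi a == \sum_x mchar_pow chi a%:Z x %[mod e])%A.
  apply: (big_ind2 (fun u v => (u == v %[mod e])%A)) => //.
    by move=> *; apply: eqAmodD.
  move=> x _; rewrite -[X in (_ == X %[mod _])%A](mulr1 (mchar_pow chi a%:Z x)).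
  apply: eqAmodMl; first exact: (mpow_Aint cardF).
  exact: root_cong (zeta_Aint pr_p).
apply: (eqAmod_trans H1); rewrite sum_mpow; case: ifP => // _.
have -> : (Q1%:R : algC) = (p ^ n)%:R + (-1).
  have h : (p ^ n)%N = (Q1 + 1)%N by rewrite addn1 -(qE cardF).
  by rewrite [in RHS]h natrD addrK.
rewrite -[X in (_ == X %[mod _])%A](add0r (-1)) eqAmodDr.
rewrite -(prednK n_gt0) expnS natrM -(mul0r ((p ^ n.-1)%:R)).
apply: eqAmodMr; first by rewrite rpred_nat.
exact: p_cong.
Qed.

Lemma detA_cong :
  (\det (Amat p n chi k) == (-1) ^+ ('C(m, 2) + 1) %[mod 1 - zeta p])%A.
Proof.
rewrite -(det_Amod _ (m_gt0 cardF k_gt0 kQ)).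
apply: det_cong => i j.
- by rewrite mxE; apply: (Gs_Aint _ cardF).
- by rewrite mxE; case: ifP; rewrite ?rpredN ?rpred1 ?rpred0.
rewrite !mxE -/(Gs _ _ _ _).
have E : (Q1 %| k * i + k * j)%N = ((i + j) %% m == 0)%N.
  exact: (dvd_eq _ _ k_gt0 (QE kQ)).
by rewrite -E; apply: Gs_cong.
Qed.

End Main3.

Unset Implicit Arguments.

Theorem theorem1p1 (p n : nat) (F : finFieldType) (chi : F -> algC) (k : nat) :
  prime p -> (0 < n)%N -> #|F| = (p ^ n)%N ->
  mchar_generator chi -> (0 < k)%N -> (k %| (p ^ n).-1)%N ->
  let m := ((p ^ n).-1 %/ k)%N in
  [/\ \det (Amat p n chi k) \is a Num.int,
      \det (Bmat p n chi k) \in Crat,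
      (forall chi' : F -> algC, mchar_generator chi' ->
         \det (Amat p n chi' k) = \det (Amat p n chi k) /\
         \det (Bmat p n chi' k) = \det (Bmat p n chi k))
    & exists z : algC, z \is a Num.int /\
        \det (Amat p n chi k) - (-1) ^+ ((m * m - m + 2) %/ 2) = p%:R * z].
Proof.
move=> pr_p n_gt0 cardF gc k_gt0 kQ m.
have [ZA QB] := det_rat pr_p n_gt0 cardF gc k_gt0 kQ.
split => //.
  by move=> chi' gc'; apply: (det_indep cardF gc k_gt0 kQ gc').
have -> : ((m * m - m + 2) %/ 2)%N = ('C(m, 2) + 1)%N.
  have hx : (m * m - m = m * m.-1)%N by rewrite -subn1 mulnBr muln1.
  rewrite hx bin2 -divn2; move: (m * m.-1)%N => x; lia.
have Hc := detA_cong pr_p n_gt0 cardF gc k_gt0 kQ.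
have ZN : \det (Amat p n chi k) - (-1) ^+ ('C(m, 2) + 1) \is a Num.int.
  by rewrite rpredB // rpredX // rpredN rpred1.
have HN : (\det (Amat p n chi k) - (-1) ^+ ('C(m, 2) + 1) == 0 %[mod 1 - zeta p])%A.
  by rewrite /eqAmod subr0.
have [c Zc Ec] := int_div_pi pr_p ZN HN.
by exists c.
Qed.
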